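(* Let $G$ be a simple graph of order $n \ge 4$. If $$\mu(\overline{G}) < \sqrt{\frac{(n-2)^2}{n}},$$ then $G$ is Hamilton-connected.
   Context: $\overline{G}$ denotes the complement of $G$. For a simple graph $H$, $\mu(H)$ denotes the largest eigenvalue (spectral radius) of the adjacency matrix of $H$. A graph is Hamilton-connected if every two distinct vertices are joined by a Hamiltonian path (a path containing all vertices). *)

(* Defs.v *)
From mathcomp Require Import all_boot all_order all_algebra.
From mathcomp Require Import classical_sets reals.
Set Implicit Arguments. Unset Strict Implicit. Unset Printing Implicit Defensive.
Import Order.TTheory GRing.Theory Num.Theory.
Local Open Scope ring_scope.

Definition simple_graph (n : nat) (G : rel 'I_n) : Prop :=
  symmetric G /\ irreflexive G.

Definition complement (n : nat) (G : rel 'I_n) : rel 'I_n :=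
  fun i j => (i != j) && ~~ G i j.

Definition adjmx (R : realType) (n : nat) (G : rel 'I_n) : 'M[R]_n :=
  \matrix_(i < n, j < n) (G i j)%:R.

(* Spectral radius: the largest eigenvalue of the adjacency matrix
   (the supremum of its (finite, nonempty, real) set of eigenvalues). *)
Definition mu (R : realType) (n : nat) (G : rel 'I_n) : R :=
  sup [set a : R | eigenvalue (adjmx R G) a].

Definition hamiltonian_path (n : nat) (G : rel 'I_n) (u v : 'I_n) : Prop :=
  exists p : seq 'I_n,
    [/\ path G u p, last u p = v, uniq (u :: p) & forall w, w \in u :: p].

Definition hamilton_connected (n : nat) (G : rel 'I_n) : Prop :=
  forall u v : 'I_n, u != v -> hamiltonian_path G u v.

(* Main.v *)
Require Import Defs.
From mathcomp Require Import all_boot all_order all_algebra.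
From mathcomp Require Import classical_sets reals.
From mathcomp Require Import complex.
From mathcomp Require Import zify ring lra.
From Stdlib Require Import Classical.
Import Order.TTheory GRing.Theory Num.Theory.

Section Spectral.
Local Open Scope ring_scope.
Local Open Scope sesquilinear_scope.

Lemma rayC (R : realType) n (B : 'M[R[i]]_n) (y : 'rV[R[i]]_n) :
  (0 < n)%N -> B \is hermsymmx ->
  exists i : 'I_n, eigenvalue B (spectral_diag B 0 i) /\
     spectral_diag B 0 i \is Num.real /\
    (y *m B *m y^t*) 0 0 <= spectral_diag B 0 i * (y *m y^t*) 0 0.
Proof.
move=> n0 Bh.
set P := spectralmx B; set d := spectral_diag B.
have BE : B = invmx P *m diag_mx d *m P.
  exact/orthomx_spectralP/hermitian_normalmx.
have dreal : forall j, d 0 j \is Num.real.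
  by move=> j; apply: (mxOverP (hermitian_spectral_diag_real Bh)).
have Pu : P \is unitarymx by exact: spectral_unitarymx.
have Punit : P \in unitmx by exact: spectral_unit.
have [i imax] : exists i : 'I_n, forall j, d 0 j <= d 0 i.
  exists (Order.arg_max (Ordinal n0) xpredT (fun i => complex.Re (d 0 i))).
  move=> j; rewrite -(RRe_real (dreal j)).
  case: arg_maxP => // k _ Hk.
  by rewrite -(RRe_real (dreal k)) lecR; apply: Hk.
exists i; split; [|split; first exact: dreal i].
  apply/eigenvalueP; exists (delta_mx 0 i *m P).
    rewrite {1}BE !mulmxA -[_ *m P *m invmx P]mulmxA mulmxV // mulmx1.
    rewrite mul_mx_diag scalemxAl; congr (_ *m _).
    apply/matrixP => a b; rewrite !mxE.
    have -> : a = 0 by rewrite ord1.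
    case: (eqVneq b i) => [->|nb]; rewrite ?eqxx /=; [exact: mulrC | by rewrite mul0r mulr0].
  apply/eqP => /(congr1 (mulmx^~ (invmx P))).
  rewrite -mulmxA mulmxV // mulmx1 mul0mx => /matrixP/(_ 0 i).
  by rewrite !mxE !eqxx /= => /eqP; rewrite oner_eq0.
have PtP : P^t* *m P = 1%:M by rewrite -invmx_unitary // mulVmx.
set z := y *m P^t*.
have zE : P *m y^t* = z^t* by rewrite /z trmx_mul map_mxM trmxCK.
have -> : y *m B *m y^t* = z *m diag_mx d *m z^t*.
  by rewrite BE invmx_unitary // !mulmxA -[_ *m P *m _]mulmxA zE.
have -> : y *m y^t* = z *m z^t*.
  by rewrite -zE /z mulmxA -[y *m _ *m P]mulmxA PtP mulmx1.
rewrite mul_mx_diag !mxE mulr_sumr; apply: ler_sum => j _; rewrite !mxE.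
rewrite [X in X <= _]mulrAC [X in X <= _]mulrC; apply: ler_wpM2r; last exact: imax.
exact: mul_conjC_ge0.
Qed.

Lemma rayR (R : realType) n (A : 'M[R]_n) (x : 'rV[R]_n) :
  (0 < n)%N -> A^T = A ->
  exists a, eigenvalue A a /\ (x *m A *m x^T) 0 0 <= a * (x *m x^T) 0 0.
Proof.
move=> n0 As.
pose f := real_complex R.
have fc : forall r : R, (f r)^* = f r.
  by move=> r; apply/CrealP; rewrite complex_real.
have Bh : map_mx f A \is hermsymmx.
  apply: realsym_hermsym.
    apply/is_hermitianmxP; rewrite expr0 scale1r; apply/matrixP => i j.
    by rewrite !mxE /= -{1}As mxE.
  by apply/mxOverP => i j; rewrite mxE /f complex_real.
have [i [ei [ri le]]] := @rayC R n (map_mx f A) (map_mx f x) n0 Bh.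
set c := spectral_diag _ 0 i in ei ri le.
exists (complex.Re c); split.
  move: ei; rewrite -(RRe_real ri) !eigenvalue_root_char -map_char_poly.
  by rewrite (fmorph_root f).
have tE : (map_mx f x)^t* = map_mx f (x^T).
  by apply/matrixP => a b; rewrite !mxE fc.
move: le; rewrite tE -!map_mxM !mxE -(RRe_real ri).
by rewrite -rmorphM lecR.
Qed.

End Spectral.

Lemma arith1 n a b c d : (0 < c)%N -> (0 < d)%N -> (a + c = n.-1)%N -> (b + d = n.-1)%N -> (a + b <= n)%N -> (n - 3 <= c * d)%N.
Proof. move=> c0 d0 h1 h2 h3. have : (c + d - 1 <= c * d)%N. case: c c0 {h1} => // c _; case: d d0 {h2} => // d _. rewrite mulSnr mulnSr. lia. lia. Qed.
Lemma arith2 n : (4 <= n)%N -> ((n-2)^2 <= (n-3) * n)%N.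
Proof. move=> h. rewrite -(subnK h). set m := (n - 4)%N. have -> : (m + 4 - 2 = m + 2)%N by lia. have -> : (m + 4 - 3 = m + 1)%N by lia. rewrite expnS expn1. nia. Qed.

Section Graphs.
Set Implicit Arguments. Unset Strict Implicit. Unset Printing Implicit Defensive.

Section P.
Variable T : eqType.

Lemma split2 (s1 s2 P Q : seq T) (a b c d : T) :
  s1 ++ a :: b :: s2 = P ++ c :: d :: Q -> c != a -> c != b -> d != a ->
  (exists M, s1 = P ++ c :: d :: M /\ Q = M ++ a :: b :: s2) \/
  (exists M, s2 = M ++ c :: d :: Q /\ P = s1 ++ a :: b :: M).
Proof.
elim: s1 P => [|h s1 IH] P; case: P => [|p P] /= E ca cb da.
- by case: E => *; subst; rewrite eqxx in ca.
- case: P E => [|p' P] /= E; case: E => *; subst; first by rewrite eqxx in cb.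
  by right; exists P.
- case: s1 IH E => [|h' s1] _ /= E; case: E => *; subst; first by rewrite eqxx in da.
  by left; exists s1.
- case: E => E1 E2; subst; case: (IH _ E2 ca cb da) => [[M [-> ->]]|[M [-> ->]]].
    by left; exists M.
  by right; exists M.
Qed.

Variable G : rel T.
Hypothesis Gs : symmetric G.

Lemma rev_sortedG p : sorted G (rev p) = sorted G p.
Proof.
rewrite rev_sorted; case: p => //= x p; apply: eq_path => a b; exact: Gs.
Qed.

Lemma reroute_left P z z' M u v s2 :
  sorted G (P ++ z :: z' :: M ++ [:: u]) -> sorted G (v :: s2) -> G z u -> G z' v ->
  sorted G (P ++ z :: u :: rev (z' :: M) ++ v :: s2).
Proof.
rewrite !sorted_cat_cons => /andP[-> /= /andP[_ H1]] H2 zu z'v /=.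
rewrite zu /=.
have -> : path G u (rev (z' :: M) ++ v :: s2) = sorted G ((u :: rev M) ++ z' :: v :: s2).
  by rewrite rev_cons cat_rcons.
rewrite sorted_cat_cons /= z'v H2 andbT.
rewrite andbT (_ : path G u _ = sorted G (rev (z' :: rcons M u))); last by rewrite rev_cons rev_rcons.
by rewrite rev_sortedG /= -cats1.
Qed.

Lemma reroute_right s1 u v M z z' Q :
  sorted G (rcons s1 u) -> sorted G (v :: M ++ z :: z' :: Q) -> G u z -> G v z' ->
  sorted G (s1 ++ u :: z :: rev (v :: M) ++ z' :: Q).
Proof.
move=> H1 H2 uz vz'; rewrite sorted_cat_cons H1 /= uz /=.
move: H2; rewrite -cat_cons sorted_cat_cons => /andP[H2 /= /andP[_ H3]].
have -> : path G z (rev (v :: M) ++ z' :: Q) = sorted G ((z :: rev M) ++ v :: z' :: Q).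
  by rewrite rev_cons cat_rcons.
rewrite sorted_cat_cons /= vz' H3 andbT.
rewrite (_ : path G z _ = sorted G (rev (v :: rcons M z))); last by rewrite rev_cons rev_rcons.
by rewrite andbT rev_sortedG.
Qed.

End P.


Section Loc.
Variable T : eqType.
Variables (G G' : rel T) (u v : T).
Hypothesis HG' : forall a b, G' a b -> G a b || ((a == u) && (b == v)) || ((a == v) && (b == u)).

Lemma locate s : sorted G' s -> sorted G s \/ exists s1 s2,
   s = s1 ++ u :: v :: s2 \/ s = s1 ++ v :: u :: s2.
Proof.
elim: s => [|a s IH] //=; first by left.
case: s IH => [|b s] IH /=; first by left.
move=> /andP[ab /IH [Hs|[s1 [s2 [E|E]]]]].
- move: (HG' ab); case/orP => [/orP [Gab|/andP[/eqP -> /eqP ->]]|/andP[/eqP -> /eqP ->]].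
  + by left; rewrite Gab.
  + by right; exists [::], s; left.
  + by right; exists [::], s; right.
- by right; exists (a :: s1), s2; left; rewrite E.
- by right; exists (a :: s1), s2; right; rewrite E.
Qed.

Lemma sorted_notin l : sorted G' l -> (u \notin l) || (v \notin l) -> sorted G l.
Proof.
elim: l => [|a l IH] //=; case: l IH => [|b l] IH //= /andP[ab Hl] H.
apply/andP; split; last first.
  apply: IH => //.
  by move: H; rewrite !inE !negb_or => /orP[/andP[_ ->]|/andP[_ ->]]; rewrite ?orbT.
case/orP: (HG' ab) => [/orP[->//|/andP[/eqP au /eqP bv]]|/andP[/eqP av /eqP bu]];
  by move: H; rewrite !inE ?au ?bv ?av ?bu !eqxx /= ?orbT.
Qed.
End Loc.


Definition deg n (G : rel 'I_n) (x : 'I_n) := #|[set y | G x y]|.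
Definition addE n (G : rel 'I_n) (u v : 'I_n) : rel 'I_n :=
  fun a b => G a b || ((a == u) && (b == v)) || ((a == v) && (b == u)).

Section Stab.
Variables (n : nat) (G : rel 'I_n).
Hypothesis Gsym : symmetric G.
Hypothesis Girr : irreflexive G.

Lemma size_cover (s : seq 'I_n) : uniq s -> (forall w, w \in s) -> size s = n.
Proof.
move=> Us Cs; rewrite -(card_uniqP Us) -[RHS]card_ord; apply: eq_card => w.
by rewrite Cs.
Qed.

Lemma card_nth (s : seq 'I_n) x0 (P : pred 'I_n) : uniq s -> (forall w, w \in s) ->
  #|[set y | P y]| = #|[set j : 'I_n | P (nth x0 s j)]|.
Proof.
move=> Us Cs; have Ss := size_cover Us Cs.
pose f (j : 'I_n) := nth x0 s j.
have finj : injective f.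
  move=> i j /eqP; rewrite /f nth_uniq ?Ss // => /eqP; exact: val_inj.
rewrite -[RHS](card_imset _ finj); apply: eq_card => y; rewrite inE.
apply/idP/imsetP => [Py|[j]]; last by rewrite inE => Pj ->.
have iy : (index y s < n)%N by rewrite -[X in (_ < X)%N]Ss index_mem.
by exists (Ordinal iy); rewrite ?inE /f /= nth_index.
Qed.

Lemma stable_seq u v (s s1 s2 : seq 'I_n) : ~~ G u v -> (n < deg G u + deg G v)%N ->
  uniq s -> (forall w, w \in s) -> s = s1 ++ u :: v :: s2 ->
  sorted G (rcons s1 u) -> sorted G (v :: s2) ->
  exists s', [/\ sorted G s', perm_eq s s', (forall x0, head x0 s' = head x0 s)
     & (forall x0, last x0 s' = last x0 s)].
Proof.
move=> nuv dg Us Cs Es H1 H2.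
have Ss := size_cover Us Cs.
have n0 : (0 < n)%N by case: u {Es H1 H2 nuv dg} => /= k; lia.
have hu : nth u s (size s1) = u by rewrite Es nth_cat ltnn subnn.
have hv : nth u s (size s1).+1 = v.
  by rewrite Es nth_cat ltnNge leqnSn /= subSnn.
have ju_lt : ((size s1).+1 < n)%N by move: Ss; rewrite Es size_cat /=; lia.
have [j [jn Guj Gvj]] : exists j : 'I_n,
    [/\ (j.+1 < n)%N, G u (nth u s j) & G v (nth u s j.+1)].
  case: (pickP [pred j : 'I_n | [&& (j.+1 < n)%N, G u (nth u s j) & G v (nth u s j.+1)]]).
    by move=> j /and3P[? ? ?]; exists j.
  move=> none; exfalso.
  set A := [set j : 'I_n | G u (nth u s j) && (j.+1 < n)%N].
  set B := [set j : 'I_n | (j.+1 < n)%N && G v (nth u s j.+1)].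
  have jlp : (n.-1 < n)%N by rewrite prednK.
  pose jl := Ordinal jlp.
  pose ju := Ordinal (ltnW ju_lt).
  pose j0 := Ordinal n0.
  have dA : (deg G u <= #|A| + 1)%N.
    rewrite /deg (card_nth (s:=s) u (fun y => G u y) Us Cs).
    apply: leq_trans (subset_leq_card (_ : _ \subset A :|: [set jl])) _.
      apply/fintype.subsetP => k; rewrite !inE => Gk; case: (ltnP k.+1 n) => [lt|ge].
        by rewrite Gk.
      by rewrite andbF /=; apply/eqP/val_inj => /=; move: (ltn_ord k); lia.
    by apply: leq_trans (leq_card_setU _ _) _; rewrite cards1.
  pose g (k : 'I_n) : 'I_n := insubd k k.+1.
  have dB : (deg G v <= #|B| + 1)%N.
    rewrite /deg (card_nth (s:=s) u (fun y => G v y) Us Cs).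
    apply: leq_trans (subset_leq_card (_ : _ \subset (g @: B) :|: [set j0])) _.
      apply/fintype.subsetP => k; rewrite !inE => Gk.
      case: (posnP k) => [k0|kp].
        by apply/orP; right; apply/eqP/val_inj.
      apply/orP; left; apply/imsetP.
      have kl : (k.-1 < n)%N by move: (ltn_ord k); lia.
      exists (Ordinal kl).
        by rewrite inE /= prednK ?ltn_ord ?Gk.
      apply/val_inj; rewrite /g val_insubd /= prednK ?ltn_ord //.
    apply: leq_trans (leq_card_setU _ _) _; rewrite cards1 leq_add2r.
    exact: leq_imset_card.
  have disj : A :&: B = finset.set0.
    apply/setP => k; rewrite !inE; move: (none k) => /=.
    by case: (G u _); case: (_ < n)%N; case: (G v _).
  have ljl : jl != ju.
    by apply/eqP => /(congr1 val) /=; lia.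
  have sub : A :|: B \subset ~: [set jl; ju].
    apply/fintype.subsetP => k; rewrite !inE => /orP[/andP[Gk kn]|/andP[kn Gk]];
      apply/negP => /orP[] /eqP E; subst k; move: kn Gk => /=; rewrite ?hu ?hv ?Girr //; lia.
  have := subset_leq_card sub.
  have := cardsC [set jl; ju]; rewrite cards2 ljl card_ord.
  have := cardsUI A B; rewrite disj cards0 addn0.
  lia.
set z := nth u s j; set z' := nth u s j.+1.
have Es2 : s = take j s ++ z :: z' :: drop j.+2 s.
  by rewrite -[s in LHS](cat_take_drop j) (drop_nth u) ?Ss ?(ltn_ord j) // (drop_nth u) ?Ss.
have zu : z != u by apply/eqP => E; move: Guj; rewrite -/z E Girr.
have zv : z != v by apply/eqP => E; move: Guj; rewrite -/z E (negbTE nuv).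
have z'u : z' != u by apply/eqP => E; move: Gvj; rewrite -/z' E Gsym (negbTE nuv).
case: (split2 (etrans (esym Es) Es2) zu zv z'u) => [[M [E1 E2]]|[M [E1 E2]]].
- exists (take j s ++ z :: u :: rev (z' :: M) ++ v :: s2); split.
  + apply: reroute_left => //; last by rewrite Gsym.
      by move: H1; rewrite E1 rcons_cat /= -cats1.
    by rewrite Gsym.
  + rewrite {1}Es E1; apply/permP => p; rewrite !count_cat /= count_cat count_rev /=; ring.
  + by move=> x0; rewrite [in RHS]Es E1; case: (take j s).
  + by move=> x0; rewrite [in RHS]Es E1 !last_cat /= !last_cat.
- exists (s1 ++ u :: z :: rev (v :: M) ++ z' :: drop j.+2 s); split.
  + by apply: reroute_right => //; rewrite -E1.
  + rewrite {1}Es E1; apply/permP => p; rewrite !count_cat /= !count_cat count_rev /=; ring.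
  + by move=> x0; rewrite [in RHS]Es E1; case: s1 {H1 E2 Es hu hv ju_lt}.
  + by move=> x0; rewrite [in RHS]Es E1 !last_cat /= !last_cat.
Qed.
End Stab.


Lemma hp_pieces (T : eqType) (G G' : rel T) u v s1 s2 :
  (forall a b, G' a b -> G a b || ((a == u) && (b == v)) || ((a == v) && (b == u))) ->
  uniq (s1 ++ u :: v :: s2) -> sorted G' (s1 ++ u :: v :: s2) ->
  sorted G (rcons s1 u) /\ sorted G (v :: s2).
Proof.
move=> HG; rewrite cat_uniq /= !negb_or => /and3P[_ /and3P[us1 vs1 _] /and3P[/andP[uv us2] vs2 _]].
rewrite sorted_cat_cons => /andP[Hr /= /andP[_ Hp]]; split.
  apply: (sorted_notin HG Hr); apply/orP; right.
  by rewrite mem_rcons inE negb_or vs1 andbT (eq_sym v u) uv.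
apply: (@sorted_notin _ G G' u v HG (v :: s2) Hp); apply/orP; left.
by rewrite inE negb_or uv.
Qed.

Section HC.
Variables (n : nat).

Lemma mkHP (G : rel 'I_n) x y s : sorted G s -> uniq s -> (forall w, w \in s) ->
  head x s = x -> last x s = y -> hamiltonian_path G x y.
Proof.
case: s => [|h p] /=; first by move=> _ _ /(_ x).
by move=> Hp Hu Hc Eh Hl; subst h; exists p; split.
Qed.

Lemma stable (G : rel 'I_n) u v : symmetric G -> irreflexive G ->
  ~~ G u v -> (n < deg G u + deg G v)%N ->
  hamilton_connected (addE G u v) -> hamilton_connected G.
Proof.
move=> Gs Gi nuv dg HC x y xy; have [p [Hp Hl Hu Hc]] := HC x y xy.
have HG : forall a b, addE G u v a b -> G a b || ((a == u) && (b == v)) || ((a == v) && (b == u)) by [].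
have HG2 : forall a b, addE G u v a b -> G a b || ((a == v) && (b == u)) || ((a == u) && (b == v)).
  by move=> a b /HG; rewrite -orbA (orbC (_ && _)) orbA.
have Hs : sorted (addE G u v) (x :: p) by [].
case: (locate HG Hs) => [Hs'|[s1 [s2 [E|E]]]].
- by exists p; split.
- have Hu' : uniq (s1 ++ u :: v :: s2) by rewrite -E.
  have Hs'' : sorted (addE G u v) (s1 ++ u :: v :: s2) by rewrite -E.
  have [H1 H2] := hp_pieces HG Hu' Hs''.
  have [s' [S1 P1 Hd Ll]] := stable_seq Gs Gi nuv dg Hu Hc E H1 H2.
  apply: (mkHP (s:=s')) => //; first by rewrite -(perm_uniq P1).
  all: try by move=> w; rewrite -(perm_mem P1).
  all: try by rewrite Hd.
  all: try by rewrite Ll.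
- have Hu' : uniq (s1 ++ v :: u :: s2) by rewrite -E.
  have Hs'' : sorted (addE G u v) (s1 ++ v :: u :: s2) by rewrite -E.
  have [H1 H2] := hp_pieces HG2 Hu' Hs''.
  have nvu : ~~ G v u by rewrite Gs.
  have dg' : (n < deg G v + deg G u)%N by rewrite addnC.
  have [s' [S1 P1 Hd Ll]] := stable_seq Gs Gi nvu dg' Hu Hc E H1 H2.
  apply: (mkHP (s:=s')) => //; first by rewrite -(perm_uniq P1).
  all: try by move=> w; rewrite -(perm_mem P1).
  all: try by rewrite Hd.
  all: try by rewrite Ll.
Qed.

Lemma uniq_sorted_complete (G : rel 'I_n) (l : seq 'I_n) :
  (forall a b, a != b -> G a b) -> uniq l -> sorted G l.
Proof.
move=> Gc; elim: l => [|a l IH] //=; case: l IH => [|b l] IH //=.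
rewrite inE negb_or => /andP[/andP[ab _] Hu]; rewrite Gc //=.
exact: IH.
Qed.

Lemma complete_HC (G : rel 'I_n) : (forall a b, a != b -> G a b) -> hamilton_connected G.
Proof.
move=> Gc x y xy.
pose p := rcons [seq w <- enum 'I_n | (w != x) && (w != y)] y.
have Hu : uniq (x :: p).
  rewrite /= /p rcons_uniq mem_rcons inE negb_or xy /= mem_filter eqxx /=.
  by rewrite mem_filter eqxx andbF /= filter_uniq ?enum_uniq.
exists p; split => //.
- exact: (uniq_sorted_complete (l := x :: p)).
- by rewrite /p last_rcons.
- move=> w; rewrite inE /p mem_rcons inE mem_filter mem_enum andbT.
  by case: (w == x); case: (w == y).
Qed.
End HC.


Lemma maximal n (G : rel 'I_n) : symmetric G -> irreflexive G -> ~ hamilton_connected G ->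
  exists G' : rel 'I_n, [/\ symmetric G', irreflexive G', (forall a b, G a b -> G' a b),
    ~ hamilton_connected G' &
    forall a b, a != b -> ~~ G' a b -> (deg G' a + deg G' b <= n)%N].
Proof.
have [k] := ubnP #|[set p : 'I_n * 'I_n | ~~ G p.1 p.2]|.
elim: k G => // k IH G lt Gs Gi nHC.
case: (pickP [pred p : 'I_n * 'I_n | [&& p.1 != p.2, ~~ G p.1 p.2 & (n < deg G p.1 + deg G p.2)%N]]).
  move=> [u v] /= /and3P[uv nuv dg].
  pose G1 := addE G u v.
  have G1s : symmetric G1.
    move=> a b; rewrite /G1 /addE Gs -!orbA; congr (_ || _); rewrite orbC (andbC (b == u)) (andbC (b == v)) //.
  have G1i : irreflexive G1.
    move=> a; rewrite /G1 /addE Gi /=; apply/negP => /orP[]/andP[/eqP -> /eqP E].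
      by rewrite E eqxx in uv.
    by rewrite E eqxx in uv.
  have nHC1 : ~ hamilton_connected G1 by move=> /(stable Gs Gi nuv dg).
  have lt1 : (#|[set p : 'I_n * 'I_n | ~~ G1 p.1 p.2]| < k)%N.
    apply: (@leq_trans #|[set p : 'I_n * 'I_n | ~~ G p.1 p.2]|); last by rewrite -ltnS.
    apply: proper_card; apply/fintype.properP; split.
      apply/fintype.subsetP => [[a b]]; rewrite !inE /G1 /addE /= !negb_or => /andP[/andP[-> _] _] //.
    by exists (u, v); rewrite !inE /= ?nuv // /G1 /addE !eqxx orbT.
  have [G' [G's G'i sub nHC' deg']] := IH G1 lt1 G1s G1i nHC1.
  exists G'; split => // a b Gab; apply: sub; by rewrite /G1 /addE Gab.
move=> none; exists G; split => // a b ab nab.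
move: (none (a, b)) => /=; rewrite ab nab /=.
by move/negbT; rewrite -leqNgt.
Qed.

End Graphs.

Section Spec2.
Set Implicit Arguments. Unset Strict Implicit. Unset Printing Implicit Defensive.
Local Open Scope ring_scope.

Lemma sum_indicator (R : realType) n (P : pred 'I_n) :
  \sum_k ((P k)%:R : R) = (#|[set k | P k]|)%:R.
Proof.
rewrite -sum1_card natr_sum [RHS]big_mkcond /=; apply: eq_bigr => k _.
by rewrite inE; case: (P k).
Qed.

Lemma eig_bound (R : realType) n (G : rel 'I_n) (a : R) :
  eigenvalue (adjmx R G) a -> a <= n%:R.
Proof.
case/eigenvalueP => v va vn0.
have n0 : (0 < n)%N.
  case: n G v va vn0 => // G v _; rewrite (_ : v = 0) ?eqxx //.
  by apply/matrixP => i [].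
pose i := Order.arg_max (Ordinal n0) xpredT (fun i => `|v 0 i|).
have imax : forall j, `|v 0 j| <= `|v 0 i|.
  by move=> j; rewrite /i; case: arg_maxP => // k _ Hk; apply: Hk.
have vi0 : 0 < `|v 0 i|.
  rewrite normr_gt0; apply: contra vn0 => /eqP vi; apply/eqP/matrixP => p j.
  rewrite ord1 mxE; apply/eqP; rewrite -normr_eq0 eq_le normr_ge0 andbT.
  by have := imax j; rewrite vi normr0.
have : `|a| * `|v 0 i| <= n%:R * `|v 0 i|.
  rewrite -normrM (_ : a * v 0 i = (v *m adjmx R G) 0 i); last by rewrite va mxE.
  rewrite mxE.
  apply: le_trans (ler_norm_sum _ _ _) _.
  rewrite -[n in n%:R]card_ord -sumr_const mulr_suml; apply: ler_sum => k _.
  rewrite mul1r normrM mxE; apply: le_trans (imax k).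
  rewrite -[X in _ <= X]mulr1; apply: ler_wpM2l; first exact: normr_ge0.
  by case: (G k i); rewrite ?normr1 ?normr0.
rewrite ler_pM2r // => h; exact: le_trans (ler_norm a) h.
Qed.

Lemma deg_compl n (G : rel 'I_n) i : irreflexive G ->
  (deg G i + deg (complement G) i)%N = n.-1.
Proof.
move=> Gi; rewrite /deg -[n in n.-1]card_ord -(cardsC1 i) -(cardsID [set y | G i y] [set~ i]).
congr (_ + _)%N; apply: eq_card => y; rewrite !inE /complement.
  by case: (eqVneq y i) => [->|]; rewrite ?Gi.
by rewrite andbC eq_sym.
Qed.

End Spec2.

Local Open Scope ring_scope.

Theorem theorem3p2 (R : realType) (n : nat) (G : rel 'I_n) :
  (4 <= n)%N -> simple_graph G ->
  mu R (complement G) < Num.sqrt (((n - 2)%N%:R ^+ 2) / n%:R) ->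
  hamilton_connected G.
Proof.
move=> n4 [Gs Gi] Hmu.
case: (classic (hamilton_connected G)) => // nHC; exfalso.
have [G' [G's G'i sub nHC' degc]] := maximal Gs Gi nHC.
have [a [b [ab nab]]] : exists a b, a != b /\ ~~ G' a b.
  apply: NNPP => H; apply: nHC'; apply: complete_HC => a b ab.
  by apply/negPn/negP => nab; apply: H; exists a, b.
pose H' := complement G'.
pose D i := deg H' i.
have HsymH' : forall i j, H' i j = H' j i.
  by move=> i j; rewrite /H' /complement eq_sym G's.
have Dsum : forall i, (deg G' i + D i)%N = n.-1 := fun i => deg_compl i G'i.
have Dpos : forall i j, H' i j -> (0 < D i)%N.
  by move=> i j Hij; apply/card_gt0P; exists j; rewrite inE.
have K1 : forall i j, H' i j -> (n - 3 <= D i * D j)%N.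
  move=> i j Hij; have Di := Dpos i j Hij.
  have Dj : (0 < D j)%N by apply: (Dpos j i); rewrite HsymH'.
  move: Hij => /andP[ij nij].
  exact: (arith1 _ _ _ _ _ Di Dj (Dsum i) (Dsum j) (degc i j ij nij)).
have K2 : forall i j, H' i j -> complement G i j.
  by move=> i j /andP[ij nij]; rewrite /complement ij /=; apply: contra nij; apply: sub.
set A := adjmx R (complement G).
have As : A^T = A by apply/matrixP => i j; rewrite !mxE /complement eq_sym Gs.
have n0 : (0 < n)%N by apply: leq_trans n4.
pose x := \row_i (Num.sqrt ((D i)%:R : R)) : 'rV[R]_n.
have [l [el le]] := rayR R n A x n0 As.
have xx : (x *m x^T) 0 0 = \sum_i ((D i)%:R : R).
  by rewrite !mxE; apply: eq_bigr => i _; rewrite !mxE -expr2 sqr_sqrtr // ler0n.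
have S0 : 0 < \sum_i ((D i)%:R : R).
  apply: (@lt_le_trans _ _ (D a)%:R); first by rewrite ltr0n (Dpos a b) // /H' /complement ab.
  rewrite (bigD1 a) //= lerDl; apply: sumr_ge0 => i _; exact: ler0n.
have xAx : Num.sqrt ((n-3)%N%:R) * \sum_i ((D i)%:R : R) <= (x *m A *m x^T) 0 0.
  rewrite !mxE mulr_sumr; apply: ler_sum => j _.
  rewrite (_ : ((D j)%:R : R) = \sum_k ((H' j k)%:R)); last by rewrite sum_indicator.
  rewrite mxE mulr_suml mulr_sumr; apply: ler_sum => k _.
  rewrite !mxE.
  case Hjk: (H' j k).
    rewrite (K2 k j); last by rewrite HsymH'.
    rewrite mulr1 mulr1 mulrC -sqrtrM ?ler0n // -natrM.
    by apply: ler_wsqrtr; rewrite ler_nat; apply: K1.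
  rewrite mulr0; apply: mulr_ge0; first apply: mulr_ge0; by rewrite ?sqrtr_ge0 ?ler0n.
have hl : Num.sqrt ((n-3)%N%:R) <= l.
  by rewrite -(ler_pM2r S0); apply: le_trans xAx _; rewrite -xx.
have hs : has_sup [set a : R | eigenvalue A a].
  split; first by exists l.
  by exists n%:R => y /= ey; apply: eig_bound ey.
have lmu : l <= mu R (complement G) by apply: (sup_upper_bound hs).
have hq : Num.sqrt (((n - 2)%N%:R ^+ 2) / n%:R) <= Num.sqrt ((n-3)%N%:R : R).
  apply: ler_wsqrtr; rewrite ler_pdivrMr ?ltr0n // -natrX -natrM ler_nat; exact: arith2.
have := lt_le_trans Hmu (le_trans hq (le_trans hl lmu)).
by rewrite ltxx.
Qed.
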